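(* For every integer $b\geq 1$, $$\sum_{n\geq 1}\frac{H_n}{(2n+1)^{4b+1}}=-2\lambda(4b+1)\ln 2+\Big(2b+\frac12\Big)\lambda(4b+2)-\lambda(2b+1)^2-2\sum_{q=1}^{b-1}\lambda(2q+1)\lambda(4b-2q+1),$$ where an empty sum equals $0$.
   Context: $H_n=1+\frac12+\cdots+\frac1n$ is the $n$-th harmonic number. For real $s>1$, $\lambda(s)=\sum_{n\geq 1}\frac{1}{(2n-1)^s}=(1-2^{-s})\zeta(s)$. *)

(* Defs.v *)
From Stdlib Require Import Reals.
From Coquelicot Require Import Coquelicot.
Open Scope R_scope.

Fixpoint harmonic (n : nat) : R :=
  match n with
  | O => 0
  | S m => harmonic m + / INR (S m)
  end.

(* Dirichlet lambda function at a natural argument s (> 1):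
   lambda(s) = sum_{n>=1} 1/(2n-1)^s = sum_{m>=0} 1/(2m+1)^s. *)
Definition dlambda (s : nat) : R :=
  Series (fun m : nat => / (2 * INR m + 1) ^ s).

Fixpoint sum_1_to (f : nat -> R) (N : nat) : R :=
  match N with
  | O => 0
  | S k => sum_1_to f k + f (S k)
  end.

(* Main.v *)
Require Import Defs.
From Stdlib Require Import Reals.
From Coquelicot Require Import Coquelicot.
Open Scope R_scope.
From Stdlib Require Import Lra Lia.


Lemma inv_lim : is_lim_seq (fun n => / (INR n + 1)) 0.
Proof.
  replace (Finite 0) with (Rbar_inv p_infty) by reflexivity.
  apply is_lim_seq_inv; [|discriminate].
  eapply is_lim_seq_plus; [apply is_lim_seq_INR | apply is_lim_seq_const | reflexivity].
Qed.

Lemma sum_abs_le (x y : nat -> R) N : (forall n, Rabs (x n) <= y n) ->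
  Rabs (sum_n x N) <= sum_n y N.
Proof.
  intros H. induction N.
  - rewrite !sum_O. apply H.
  - rewrite !sum_Sn. unfold plus; simpl.
    eapply Rle_trans; [apply Rabs_triang|]. specialize (H (S N)). lra.
Qed.

Lemma series_abs_le (x y : nat -> R) lx ly : (forall n, Rabs (x n) <= y n) ->
  is_series x lx -> is_series y ly -> Rabs lx <= ly.
Proof.
  intros H Hx Hy.
  assert (Hx' : is_lim_seq (sum_n x) lx) by exact Hx.
  assert (Hy' : is_lim_seq (sum_n y) ly) by exact Hy.
  apply is_lim_seq_abs in Hx'.
  pose proof (is_lim_seq_le _ _ _ _ (fun N => sum_abs_le x y N H) Hx' Hy') as L.
  simpl in L. exact L.
Qed.

Lemma tele_series : is_series (fun n => / (INR n + 1) - / (INR n + 2)) 1.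
Proof.
  assert (E : forall N, sum_n (fun n => / (INR n + 1) - / (INR n + 2)) N = 1 - / (INR N + 2)).
  { induction N.
    - rewrite sum_O. simpl. field.
    - rewrite sum_Sn, IHN, S_INR. unfold plus; simpl.
      pose proof (pos_INR N). field. lra. }
  change (is_lim_seq (sum_n (fun n => / (INR n + 1) - / (INR n + 2))) 1).
  apply is_lim_seq_ext with (fun N => 1 - / (INR (S N) + 1)).
  { intros N. rewrite E, S_INR. f_equal. f_equal. ring. }
  replace (Finite 1) with (Finite (1 - 0)) by (f_equal; ring).
  apply is_lim_seq_minus'; [apply is_lim_seq_const|].
  apply (is_lim_seq_incr_1 (fun n => / (INR n + 1))). apply inv_lim.
Qed.

Lemma ex_series_sq : ex_series (fun n => / (INR n + 1) ^ 2).
Proof.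
  apply (@ex_series_le R_AbsRing R_CompleteNormedModule _ (fun n => 2 * (/ (INR n + 1) - / (INR n + 2)))).
  - intros n. change (norm (/ (INR n + 1) ^ 2)) with (Rabs (/ (INR n + 1) ^ 2)).
    pose proof (pos_INR n).
    rewrite Rabs_pos_eq.
    + replace (2 * (/ (INR n + 1) - / (INR n + 2))) with (/ ((INR n + 1) * (INR n + 2) / 2)) by (field; lra).
      apply Rinv_le_contravar; nra.
    + apply Rlt_le, Rinv_0_lt_compat. nra.
  - exists (2 * 1). apply (is_series_scal_l 2 _ 1 tele_series).
Qed.


Lemma is_series_finsum (f : nat -> nat -> R) (Rw : nat -> R) N :
  (forall n, is_series (f n) (Rw n)) ->
  is_series (fun k => sum_n (fun n => f n k) N) (sum_n Rw N).
Proof.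
  intros H. induction N.
  - rewrite sum_O. apply is_series_ext with (f 0%nat); [intros k; rewrite sum_O; auto| apply H].
  - rewrite sum_Sn. apply is_series_ext with (fun k => plus (sum_n (fun n => f n k) N) (f (S N) k)).
    + intros k. rewrite sum_Sn. reflexivity.
    + apply (@is_series_plus R_AbsRing R_NormedModule); auto.
Qed.

Lemma is_lim_seq_of_series (a : nat -> R) l : is_series a l -> is_lim_seq (sum_n a) l.
Proof. intros H; exact H. Qed.

Lemma pm_aux (x y : R) : x = x - y + y.
Proof. ring. Qed.

Lemma fubini (f : nat -> nat -> R) (a b : nat -> R) (Rw Cl : nat -> R) la lb lr lc :
  (forall n k, Rabs (f n k) <= a n * b k) -> (forall n, 0 <= a n) -> (forall k, 0 <= b k) ->
  is_series a la -> is_series b lb ->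
  (forall n, is_series (f n) (Rw n)) -> (forall k, is_series (fun n => f n k) (Cl k)) ->
  is_series Rw lr -> is_series Cl lc -> lr = lc.
Proof.
  intros Hf Ha Hb Sa Sb SR SC Sr Sc.
  set (T := fun N => la - sum_n a N).
  assert (HT : forall N, is_series (fun n => a (S N + n)%nat) (T N)).
  { intros N. apply is_series_incr_n. lia. unfold T. simpl.
    match goal with |- is_series _ ?x => replace x with la by (unfold plus; simpl; apply pm_aux) end. exact Sa. }
  assert (Bound : forall N, Rabs (lc - sum_n Rw N) <= lb * T N).
  { intros N.
    apply (series_abs_le (fun k => Cl k - sum_n (fun n => f n k) N) (fun k => b k * T N)).
    - intros k.
      assert (Hk : is_series (fun n => f (S N + n)%nat k) (Cl k - sum_n (fun n => f n k) N)).
      { apply (@is_series_incr_n R_AbsRing R_NormedModule (fun n => f n k)). lia. simpl.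
        match goal with |- is_series _ ?x => replace x with (Cl k) by (unfold plus; simpl; apply pm_aux) end. apply SC. }
      rewrite (Rmult_comm (b k)).
      apply (series_abs_le (fun n => f (S N + n)%nat k) (fun n => a (S N + n)%nat * b k) _ _).
      + intros n; apply Hf.
      + exact Hk.
      + apply (is_series_scal_r (b k) _ _ (HT N)).
    - apply (is_series_minus Cl (fun k => sum_n (fun n => f n k) N)); [exact Sc|].
      apply is_series_finsum. exact SR.
    - apply is_series_scal_r. exact Sb. }
  assert (LT : is_lim_seq T 0).
  { replace (Finite 0) with (Finite (la - la)) by (f_equal; ring).
    apply is_lim_seq_minus'; [apply is_lim_seq_const| exact Sa]. }
  assert (L1 : is_lim_seq (fun N => lc - sum_n Rw N) 0).
  { apply is_lim_seq_abs_0.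
    apply is_lim_seq_le_le with (fun _ => 0) (fun N => lb * T N).
    - intros N; split; [apply Rabs_pos| apply Bound].
    - apply is_lim_seq_const.
    - replace (Finite 0) with (Finite (lb * 0)) by (f_equal; ring).
      apply is_lim_seq_mult'; [apply is_lim_seq_const | exact LT]. }
  assert (L2 : is_lim_seq (sum_n Rw) lc).
  { apply is_lim_seq_ext with (fun N => lc - (lc - sum_n Rw N)); [intros; ring|].
    replace (Finite lc) with (Finite (lc - 0)) by (f_equal; ring).
    apply is_lim_seq_minus'; [apply is_lim_seq_const| exact L1]. }
  assert (L3 : is_lim_seq (sum_n Rw) lr) by exact Sr.
  apply is_lim_seq_unique in L2. apply is_lim_seq_unique in L3.
  rewrite L2 in L3. injection L3. auto.
Qed.


Lemma H_S n : harmonic (S n) = harmonic n + / (INR n + 1).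
Proof. change (harmonic (S n)) with (harmonic n + / INR (S n)). rewrite S_INR. reflexivity. Qed.

Lemma H_nonneg n : 0 <= harmonic n.
Proof. induction n; [simpl; lra|]. rewrite H_S. pose proof (pos_INR n).
  assert (0 < / (INR n + 1)) by (apply Rinv_0_lt_compat; lra). lra. Qed.

Lemma H_shift m a : 0 <= harmonic (m + a) - harmonic m <= INR a / (INR m + 1).
Proof.
  induction a.
  - rewrite Nat.add_0_r. simpl. split; [lra|]. unfold Rdiv. lra.
  - rewrite Nat.add_succ_r, H_S, S_INR, plus_INR.
    pose proof (pos_INR m). pose proof (pos_INR a).
    assert (0 < / (INR m + INR a + 1)) by (apply Rinv_0_lt_compat; lra).
    assert (/ (INR m + INR a + 1) <= / (INR m + 1)) by (apply Rinv_le_contravar; lra).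
    unfold Rdiv in *. rewrite Rmult_plus_distr_r. lra.
Qed.

Lemma ln_le_sub1 y : 0 < y -> ln y <= y - 1.
Proof.
  intros Hy. rewrite <- (ln_exp (y - 1)). apply ln_le; [exact Hy|].
  pose proof (exp_ineq1_le (y - 1)). lra.
Qed.

Lemma ln_step t : 1 <= t -> / (t + 1) <= ln (t + 1) - ln t <= / t.
Proof.
  intros Ht. split.
  - rewrite <- ln_div by lra.
    assert (H := ln_le_sub1 (t / (t + 1)) ltac:(apply Rdiv_lt_0_compat; lra)).
    rewrite ln_div in H by lra. rewrite ln_div by lra.
    replace (t / (t + 1) - 1) with (- / (t + 1)) in H by (field; lra). lra.
  - rewrite <- ln_div by lra.
    assert (H := ln_le_sub1 ((t + 1) / t) ltac:(apply Rdiv_lt_0_compat; lra)).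
    replace ((t + 1) / t - 1) with (/ t) in H by (field; lra). exact H.
Qed.

Definition Lf (x : nat) := harmonic x - ln (INR x).

Lemma Lf_dec p k : 0 <= Lf (S p) - Lf (S p + k) <= / INR (S p) - / INR (S p + k).
Proof.
  induction k.
  - rewrite Nat.add_0_r. lra.
  - rewrite Nat.add_succ_r.
    assert (Ht : 1 <= INR (S p + k)) by (apply (le_INR 1); lia).
    pose proof (ln_step _ Ht) as [A1 A2].
    unfold Lf in *. rewrite (H_S (S p + k)), (S_INR (S p + k)).
    assert (/ (INR (S p + k) + 1) <= / INR (S p + k)) by (apply Rinv_le_contravar; lra).
    lra.
Qed.

Lemma H2_bound p : Rabs (harmonic (2 * S p) - harmonic (S p) - ln 2) <= / INR (S p).
Proof.
  pose proof (Lf_dec p (S p)) as [A B].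
  replace (S p + S p)%nat with (2 * S p)%nat in A, B by lia.
  unfold Lf in A, B.
  rewrite mult_INR in A, B.
  assert (P : 0 < INR (S p)) by (apply lt_0_INR; lia).
  assert (E : ln (INR 2 * INR (S p)) = ln 2 + ln (INR (S p))).
  { rewrite ln_mult; [reflexivity| simpl; lra | exact P]. }
  rewrite E in A, B.
  assert (E2 : / (INR 2 * INR (S p)) = / 2 * / INR (S p)).
  { change (INR 2) with 2. field. lra. }
  rewrite E2 in B.
  assert (0 < / INR (S p)) by (apply Rinv_0_lt_compat; lra).
  apply Rabs_le. split; lra.
Qed.

Lemma H2_lim : is_lim_seq (fun m => harmonic (2 * m) - harmonic m) (ln 2).
Proof.
  apply is_lim_seq_incr_1.
  apply is_lim_seq_ext with (fun p => ln 2 + (harmonic (2 * S p) - harmonic (S p) - ln 2)); [intros; ring|].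
  replace (Finite (ln 2)) with (Finite (ln 2 + 0)) by (f_equal; ring).
  apply is_lim_seq_plus'; [apply is_lim_seq_const|].
  apply is_lim_seq_abs_0.
  apply is_lim_seq_le_le with (fun _ => 0) (fun p => / (INR p + 1)).
  - intros p. split; [apply Rabs_pos|]. rewrite <- S_INR. apply H2_bound.
  - apply is_lim_seq_const.
  - apply inv_lim.
Qed.

Lemma Hshift_lim a : is_lim_seq (fun m => harmonic (m + a) - harmonic m) 0.
Proof.
  apply is_lim_seq_le_le with (fun _ => 0) (fun m => INR a * / (INR m + 1)).
  - intros m. apply H_shift.
  - apply is_lim_seq_const.
  - replace (Finite 0) with (Finite (INR a * 0)) by (f_equal; ring).
    apply is_lim_seq_mult'; [apply is_lim_seq_const| apply inv_lim].
Qed.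


Ltac toR := match goal with |- ?a = ?b => change (@eq R a b) end.

Ltac gen_sums := repeat match goal with |- context [sum_n ?f ?K] => let s := fresh "s" in set (s := sum_n f K) in *; clearbody s end.

Definition od (m : nat) : R := 2 * INR m + 1.

Definition Dk (n k : nat) : R := if Nat.eq_dec k n then 0 else / (2 * (INR n - INR k)).

Definition Mk (n k : nat) : R :=
  2 / od k + Dk n k
  - / (2 * INR n + 2 * INR k + 2).

Lemma sum_odd K : sum_n (fun k => / od k) K = harmonic (2 * K + 2) - harmonic (K + 1) / 2.
Proof.
  induction K.
  - rewrite sum_O. simpl. unfold od. simpl. toR; field.
  - rewrite sum_Sn, IHK. change (plus ?x ?y) with (Rplus x y); toR.
    replace (2 * S K + 2)%nat with (S (S (2 * K + 2))) by lia.
    replace (S K + 1)%nat with (S (K + 1)) by lia.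
    rewrite (H_S (S (2 * K + 2))), (H_S (2 * K + 2)), (H_S (K + 1)).
    unfold od. rewrite !S_INR, !plus_INR, !mult_INR. simpl INR.
    pose proof (pos_INR K). toR; field. lra.
Qed.

Lemma sum_even n K : sum_n (fun k => / (2 * INR n + 2 * INR k + 2)) K
  = (harmonic (n + K + 1) - harmonic n) / 2.
Proof.
  induction K.
  - rewrite sum_O. replace (n + 0 + 1)%nat with (S n) by lia. rewrite H_S. simpl INR.
    pose proof (pos_INR n). toR; field. lra.
  - rewrite sum_Sn, IHK. change (plus ?x ?y) with (Rplus x y); toR.
    replace (n + S K + 1)%nat with (S (n + K + 1)) by lia.
    rewrite (H_S (n + K + 1)). rewrite !S_INR, !plus_INR. simpl INR.
    pose proof (pos_INR K). pose proof (pos_INR n). toR; field. lra.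
Qed.

Lemma sum_diff1 K : forall p, sum_n (fun k => / (2 * (INR (K + 1 + p) - INR k))) K
  = (harmonic (K + 1 + p) - harmonic p) / 2.
Proof.
  induction K; intros p.
  - rewrite sum_O. replace (0 + 1 + p)%nat with (S p) by lia. rewrite H_S, S_INR. simpl INR.
    pose proof (pos_INR p). toR; field. lra.
  - rewrite sum_Sn.
    rewrite (sum_n_ext (fun k => / (2 * (INR (S K + 1 + p) - INR k)))
                       (fun k => / (2 * (INR (K + 1 + S p) - INR k)))).
    2: { intros k. replace (S K + 1 + p)%nat with (K + 1 + S p)%nat by lia. reflexivity. }
    rewrite IHK. change (plus ?x ?y) with (Rplus x y); toR.
    replace (K + 1 + S p)%nat with (S K + 1 + p)%nat by lia.
    replace (INR (S K + 1 + p) - INR (S K)) with (INR p + 1).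
    2: { rewrite !plus_INR, !S_INR. simpl. ring. }
    rewrite H_S. pose proof (pos_INR p). toR; field. lra.
Qed.

Lemma sum_diff n L : sum_n (Dk n) (n + L)
  = (harmonic n - harmonic L) / 2.
Proof.
  induction L.
  - rewrite Nat.add_0_r. destruct n.
    + rewrite sum_O. unfold Dk. simpl. toR; field.
    + rewrite sum_Sn. replace (Dk (S n) (S n)) with 0 by (unfold Dk; destruct (Nat.eq_dec (S n) (S n)); [reflexivity|congruence]).
      assert (E : sum_n (Dk (S n)) n
                = sum_n (fun k => / (2 * (INR (n + 1 + 0) - INR k))) n).
      { apply sum_n_ext_loc. intros k Hk. unfold Dk. destruct (Nat.eq_dec k (S n)); [lia|].
        replace (n + 1 + 0)%nat with (S n) by lia. reflexivity. }
      rewrite E, sum_diff1. change (plus ?x ?y) with (Rplus x y); toR.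
      replace (n + 1 + 0)%nat with (S n) by lia. rewrite H_S. simpl harmonic.
      pose proof (pos_INR n). toR; field. lra.
  - rewrite Nat.add_succ_r, sum_Sn, IHL. change (plus ?x ?y) with (Rplus x y); toR.
    unfold Dk at 1. destruct (Nat.eq_dec (S (n + L)) n); [lia|].
    rewrite H_S, S_INR, plus_INR. pose proof (pos_INR L). toR; field. lra.
Qed.

Lemma sum_Mk n K : sum_n (Mk n) K = 2 * sum_n (fun k => / od k) K
  + sum_n (Dk n) K
  - sum_n (fun k => / (2 * INR n + 2 * INR k + 2)) K.
Proof.
  induction K.
  - rewrite !sum_O. unfold Mk. toR. reflexivity.
  - rewrite !sum_Sn, IHK. repeat change (plus ?x ?y) with (Rplus x y). unfold Mk. toR. gen_sums. unfold Rdiv. ring.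
Qed.

Lemma Phi_series n : is_series (Mk n) (harmonic n + 2 * ln 2).
Proof.
  change (is_lim_seq (sum_n (Mk n)) (harmonic n + 2 * ln 2)).
  apply (is_lim_seq_incr_n _ n).
  apply is_lim_seq_ext with (fun L => harmonic n
     + 2 * (harmonic (2 * (L + (n + 1))) - harmonic (L + (n + 1)))
     + (harmonic (L + (n + 1)) - harmonic L) / 2
     - (harmonic (L + (n + 1) + n) - harmonic (L + (n + 1))) / 2).
  { intros L. rewrite sum_Mk, sum_odd, sum_even.
    rewrite (Nat.add_comm L n), sum_diff.
    replace (2 * (n + L) + 2)%nat with (2 * (L + (n + 1)))%nat by lia.
    replace (n + L + 1)%nat with (L + (n + 1))%nat by lia.
    replace (n + (n + L) + 1)%nat with (L + (n + 1) + n)%nat by lia.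
    toR. field. }
  replace (Finite (harmonic n + 2 * ln 2)) with
    (Finite (harmonic n + 2 * ln 2 + 0 / 2 - 0 / 2)) by (f_equal; field).
  apply is_lim_seq_minus'; [apply is_lim_seq_plus'; [apply is_lim_seq_plus'|]|].
  - apply is_lim_seq_const.
  - apply is_lim_seq_mult'; [apply is_lim_seq_const|].
    apply (is_lim_seq_incr_n (fun m => harmonic (2 * m) - harmonic m) (n + 1)). apply H2_lim.
  - apply is_lim_seq_mult'; [|apply is_lim_seq_const].
    apply Hshift_lim.
  - apply is_lim_seq_mult'; [|apply is_lim_seq_const].
    apply (is_lim_seq_incr_n (fun m => harmonic (m + n) - harmonic m) (n + 1)). apply Hshift_lim.
Qed.


Lemma od_ge1 n : 1 <= od n.
Proof. unfold od. pose proof (pos_INR n). lra. Qed.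

Lemma od_pos n : 0 < od n.
Proof. pose proof (od_ge1 n). lra. Qed.

Lemma lambda_series r : (2 <= r)%nat -> is_series (fun m => / od m ^ r) (dlambda r).
Proof.
  intros Hr. unfold dlambda. fold od.
  apply Series_correct.
  apply (@ex_series_le R_AbsRing R_CompleteNormedModule _ (fun n => / (INR n + 1) ^ 2)).
  2: apply ex_series_sq.
  intros n. change (norm (/ od n ^ r)) with (Rabs (/ od n ^ r)).
  pose proof (od_ge1 n). pose proof (pos_INR n).
  rewrite Rabs_pos_eq.
  2: { apply Rlt_le, Rinv_0_lt_compat, pow_lt. lra. }
  apply Rinv_le_contravar. apply pow_lt; lra.
  apply Rle_trans with (od n ^ 2).
  - apply pow_incr. split; [lra|]. unfold od. lra.
  - apply Rle_pow; auto.
Qed.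

Lemma indic_series n (x : R) : is_series (fun k => if Nat.eq_dec k n then x else 0) x.
Proof.
  change (is_lim_seq (sum_n (fun k => if Nat.eq_dec k n then x else 0)) x).
  apply (is_lim_seq_incr_n _ n).
  apply is_lim_seq_ext with (fun _ => x); [|apply is_lim_seq_const].
  intros L. induction L.
  - simpl. destruct n.
    + rewrite sum_O. reflexivity.
    + rewrite sum_Sn. destruct (Nat.eq_dec (S n) (S n)); [|congruence].
      rewrite (sum_n_ext_loc _ (fun _ => 0)).
      * rewrite sum_n_const. change (plus ?a ?b) with (Rplus a b). toR. rewrite Rmult_0_r. ring.
      * intros k Hk. destruct (Nat.eq_dec k (S n)); [lia|reflexivity].
  - replace (S L + n)%nat with (S (L + n)) by lia. rewrite sum_Sn, <- IHL. destruct (Nat.eq_dec (S (L + n)) n); [lia|].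
    change (plus ?a ?b) with (Rplus a b). toR. ring.
Qed.

Lemma sum1_series (g : nat -> nat -> R) (l : nat -> R) c :
  (forall t, (1 <= t <= c)%nat -> is_series (g t) (l t)) ->
  is_series (fun k => sum_1_to (fun t => g t k) c) (sum_1_to l c).
Proof.
  induction c; intros H.
  - simpl. apply is_series_ext with (fun k => if Nat.eq_dec k 0 then 0 else 0).
    + intros k; destruct (Nat.eq_dec k 0); reflexivity.
    + apply indic_series.
  - simpl. apply (@is_series_plus R_AbsRing R_NormedModule).
    + apply IHc. intros; apply H; lia.
    + apply H; lia.
Qed.

Lemma sum1_ext_loc (f g : nat -> R) N : (forall t, (1 <= t <= N)%nat -> f t = g t) ->
  sum_1_to f N = sum_1_to g N.
Proof.
  induction N; intros H; simpl; [reflexivity|].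
  rewrite IHN by (intros; apply H; lia). rewrite H by lia. reflexivity.
Qed.

Lemma sum1_S f N : sum_1_to f (S N) = sum_1_to f N + f (S N).
Proof. reflexivity. Qed.

Lemma sum1_scal a f N : sum_1_to (fun t => a * f t) N = a * sum_1_to f N.
Proof. induction N; simpl; [ring|]. rewrite IHN. ring. Qed.

Lemma sum1_const x N : sum_1_to (fun _ => x) N = INR N * x.
Proof. induction N; simpl sum_1_to; [simpl; ring|]. rewrite IHN, S_INR. ring. Qed.

Lemma PF1 (i j : R) c : 0 < i -> 0 < j -> i ^ 2 - j ^ 2 <> 0 ->
  / (j ^ (2 * c + 1) * (i ^ 2 - j ^ 2)) =
  sum_1_to (fun t => / i ^ (2 * (c - t + 1)) * / j ^ (2 * t + 1)) c
  + / i ^ (2 * c) * / (j * (i ^ 2 - j ^ 2)).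
Proof.
  intros Hi Hj HD. induction c.
  - simpl. field. split; auto; lra.
  - rewrite sum1_S. cbv beta.
    rewrite (sum1_ext_loc _ (fun t => / i ^ 2 * (/ i ^ (2 * (c - t + 1)) * / j ^ (2 * t + 1)))).
    2: { intros t Ht. replace (2 * (S c - t + 1))%nat with (2 * (c - t + 1) + 2)%nat by lia.
         rewrite pow_add. field. repeat split; try apply pow_nonzero; lra. }
    rewrite sum1_scal.
    set (S0 := sum_1_to (fun t => / i ^ (2 * (c - t + 1)) * / j ^ (2 * t + 1)) c) in *.
    replace (2 * (S c - S c + 1))%nat with 2%nat by lia.
    replace (2 * S c + 1)%nat with (2 * c + 1 + 2)%nat by lia.
    replace (2 * S c)%nat with (2 * c + 2)%nat by lia.
    replace (j ^ (2 * c + 1 + 2)) with (j ^ (2 * c + 1) * j ^ 2) by (symmetry; apply pow_add).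
    replace (i ^ (2 * c + 2)) with (i ^ (2 * c) * i ^ 2) by (symmetry; apply pow_add).
    assert (E : S0 = / (j ^ (2 * c + 1) * (i ^ 2 - j ^ 2)) - / i ^ (2 * c) * / (j * (i ^ 2 - j ^ 2))) by lra.
    rewrite E.
    assert (j ^ (2 * c + 1) <> 0) by (apply pow_nonzero; lra).
    assert (i ^ (2 * c) <> 0) by (apply pow_nonzero; lra).
    field. repeat split; auto; try lra; apply pow_nonzero; lra.
Qed.

Definition Kf (c n k : nat) : R :=
  if Nat.eq_dec n k then - / (2 * od n ^ (2 * c + 4))
  else 2 / (od n * od k ^ (2 * c + 1) * (od n ^ 2 - od k ^ 2)).

Lemma od_diff n k : od n - od k = 2 * (INR n - INR k).
Proof. unfold od. ring. Qed.

Lemma od_sum n k : od n + od k = 2 * INR n + 2 * INR k + 2.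
Proof. unfold od. ring. Qed.

Lemma od_neq n k : n <> k -> od n - od k <> 0.
Proof.
  intros H. rewrite od_diff. intros E.
  assert (INR n = INR k) by lra. apply INR_eq in H0. auto.
Qed.

Lemma Kf_row c n k : Kf c n k =
  2 * sum_1_to (fun t => / od n ^ (2 * (c - t + 1) + 1) * / od k ^ (2 * t + 1)) c
  + / od n ^ (2 * c + 3) * Mk n k
  - (if Nat.eq_dec k n then (2 * INR c + 2) * / od n ^ (2 * c + 4) else 0).
Proof.
  pose proof (od_pos n) as Pn. pose proof (od_pos k) as Pk.
  unfold Kf, Mk, Dk.
  destruct (Nat.eq_dec n k) as [<-|Hnk].
  - destruct (Nat.eq_dec n n); [|congruence].
    rewrite (sum1_ext_loc _ (fun _ => / od n ^ (2 * c + 4))).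
    2: { intros t Ht. rewrite <- Rinv_mult. f_equal. rewrite <- pow_add. f_equal. lia. }
    rewrite sum1_const.
    replace (2 * INR n + 2 * INR n + 2) with (2 * od n) by (unfold od; ring).
    replace (od n ^ (2 * c + 4)) with (od n ^ (2 * c + 3) * od n) by (replace (2 * c + 4)%nat with (S (2 * c + 3)) by lia; simpl; ring).
    assert (od n ^ (2 * c + 3) <> 0) by (apply pow_nonzero; lra).
    field. lra.
  - destruct (Nat.eq_dec k n) as [E|_]; [congruence|].
    pose proof (od_neq n k Hnk) as Hd.
    assert (HD : od n ^ 2 - od k ^ 2 <> 0).
    { replace (od n ^ 2 - od k ^ 2) with ((od n - od k) * (od n + od k)) by ring.
      apply Rmult_integral_contrapositive; split; lra. }
    rewrite (sum1_ext_loc _ (fun t => / od n * (/ od n ^ (2 * (c - t + 1)) * / od k ^ (2 * t + 1)))).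
    2: { intros t Ht. rewrite pow_add, pow_1. field. repeat split; try apply pow_nonzero; lra. }
    rewrite sum1_scal.
    pose proof (PF1 (od n) (od k) c Pn Pk HD) as P.
    set (S0 := sum_1_to (fun t => / od n ^ (2 * (c - t + 1)) * / od k ^ (2 * t + 1)) c) in *.
    assert (E : S0 = / (od k ^ (2 * c + 1) * (od n ^ 2 - od k ^ 2))
                     - / od n ^ (2 * c) * / (od k * (od n ^ 2 - od k ^ 2))) by lra.
    rewrite E. rewrite <- od_diff, <- od_sum.
    replace (od n ^ (2 * c + 3)) with (od n ^ (2 * c) * od n ^ 3) by (rewrite <- pow_add; f_equal; lia).
    assert (od n ^ (2 * c) <> 0) by (apply pow_nonzero; lra).
    assert (od k ^ (2 * c + 1) <> 0) by (apply pow_nonzero; lra).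
    unfold Rminus at 1. field.
    repeat split; auto; try lra.
Qed.

Lemma Kf_col c n k : Kf c n k =
  - / od k ^ (2 * c + 3) * Mk k n + (if Nat.eq_dec n k then / od k ^ (2 * c + 4) else 0).
Proof.
  pose proof (od_pos n) as Pn. pose proof (od_pos k) as Pk.
  unfold Kf, Mk, Dk.
  destruct (Nat.eq_dec n k) as [<-|Hnk].
  - replace (2 * INR n + 2 * INR n + 2) with (2 * od n) by (unfold od; ring).
    replace (od n ^ (2 * c + 4)) with (od n ^ (2 * c + 3) * od n) by (replace (2 * c + 4)%nat with (S (2 * c + 3)) by lia; simpl; ring).
    assert (od n ^ (2 * c + 3) <> 0) by (apply pow_nonzero; lra).
    field. lra.
  - pose proof (od_neq k n (not_eq_sym Hnk)) as Hd.
    assert (HD : od n ^ 2 - od k ^ 2 <> 0).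
    { replace (od n ^ 2 - od k ^ 2) with ((od k - od n) * (- (od n + od k))) by ring.
      apply Rmult_integral_contrapositive; split; lra. }
    rewrite <- od_diff. replace (2 * INR k + 2 * INR n + 2) with (od n + od k) by (unfold od; ring).
    replace (od k ^ (2 * c + 3)) with (od k ^ (2 * c + 1) * od k ^ 2) by (rewrite <- pow_add; f_equal; lia).
    assert (od k ^ (2 * c + 1) <> 0) by (apply pow_nonzero; lra).
    field. repeat split; auto; try lra.
Qed.

Lemma Kf_bound c n k : (1 <= c)%nat -> Rabs (Kf c n k) <= / od n ^ 2 * / od k ^ 2.
Proof.
  intros Hc.
  pose proof (od_ge1 n) as Pn. pose proof (od_ge1 k) as Pk.
  unfold Kf. destruct (Nat.eq_dec n k) as [<-|Hnk].
  - rewrite Rabs_Ropp, Rabs_pos_eq.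
    2: { apply Rlt_le, Rinv_0_lt_compat. assert (0 < od n ^ (2 * c + 4)) by (apply pow_lt; lra). lra. }
    rewrite <- Rinv_mult. apply Rinv_le_contravar.
    + apply Rmult_lt_0_compat; apply pow_lt; lra.
    + assert (od n ^ 2 * od n ^ 2 <= od n ^ (2 * c + 4)).
      { rewrite <- pow_add. apply Rle_pow; [lra|lia]. }
      assert (0 < od n ^ (2 * c + 4)) by (apply pow_lt; lra). lra.
  - assert (Hd2 : 2 <= Rabs (od n - od k)).
    { rewrite od_diff, Rabs_mult, (Rabs_pos_eq 2) by lra.
      assert (1 <= Rabs (INR n - INR k)); [|lra].
      destruct (proj1 (Nat.lt_gt_cases n k) Hnk) as [H|H].
      - apply le_INR in H. rewrite S_INR in H.
        unfold Rabs; destruct Rcase_abs; lra.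
      - apply le_INR in H. rewrite S_INR in H.
        unfold Rabs; destruct Rcase_abs; lra. }
    assert (Hj : od k ^ 2 <= od k ^ (2 * c + 1)) by (apply Rle_pow; [lra|lia]).
    assert (Hj2 : 1 <= od k ^ 2) by (rewrite <- (pow1 2); apply pow_incr; lra).
    assert (HX : 2 * od n ^ 2 * od k ^ 2 <= Rabs (od n * od k ^ (2 * c + 1) * (od n ^ 2 - od k ^ 2))).
    { replace (od n ^ 2 - od k ^ 2) with ((od n - od k) * (od n + od k)) by ring.
      rewrite !Rabs_mult, (Rabs_pos_eq (od n)), (Rabs_pos_eq (od k ^ (2 * c + 1))), (Rabs_pos_eq (od n + od k)) by (try apply pow_le; lra).
      assert (2 * od n <= Rabs (od n - od k) * (od n + od k)) by nra.
      assert (0 <= od k ^ 2) by nra.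
      apply Rle_trans with (od n * od k ^ 2 * (2 * od n)).
      - right. ring.
      - apply Rmult_le_compat; try lra.
        + apply Rmult_le_pos; lra.
        + apply Rmult_le_compat_l; lra. }
    assert (P2 : 0 < 2 * od n ^ 2 * od k ^ 2).
    { assert (0 < od n ^ 2) by (apply pow_lt; lra). assert (0 < od k ^ 2) by (apply pow_lt; lra). nra. }
    unfold Rdiv. rewrite Rabs_mult, Rabs_inv, (Rabs_pos_eq 2) by lra.
    apply Rle_trans with (2 * / (2 * od n ^ 2 * od k ^ 2)).
    + apply Rmult_le_compat_l; [lra|]. apply Rinv_le_contravar; auto.
    + right. field. repeat split; try apply pow_nonzero; lra.
Qed.

Lemma is_series_lin3 (u v w : nat -> R) (a b d al be : R) :
  is_series u a -> is_series v b -> is_series w d ->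
  is_series (fun k => al * u k + be * v k - w k) (al * a + be * b - d).
Proof.
  intros Hu Hv Hw.
  pose proof (@is_series_scal_l R_AbsRing R_NormedModule al u a Hu) as H1.
  pose proof (@is_series_scal_l R_AbsRing R_NormedModule be v b Hv) as H2.
  pose proof (@is_series_plus R_AbsRing R_NormedModule _ _ _ _ H1 H2) as H3.
  pose proof (@is_series_minus R_AbsRing R_NormedModule _ _ _ _ H3 Hw) as H4.
  exact H4.
Qed.

Definition Rw (c n : nat) : R :=
  2 * sum_1_to (fun t => / od n ^ (2 * (c - t + 1) + 1) * dlambda (2 * t + 1)) c
  + / od n ^ (2 * c + 3) * (harmonic n + 2 * ln 2)
  - (2 * INR c + 2) * / od n ^ (2 * c + 4).

Lemma row_series c n : is_series (Kf c n) (Rw c n).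
Proof.
  apply is_series_ext with (fun k =>
    2 * sum_1_to (fun t => / od n ^ (2 * (c - t + 1) + 1) * / od k ^ (2 * t + 1)) c
  + / od n ^ (2 * c + 3) * Mk n k
  - (if Nat.eq_dec k n then (2 * INR c + 2) * / od n ^ (2 * c + 4) else 0)).
  { intros k. symmetry. apply Kf_row. }
  unfold Rw. apply is_series_lin3.
  - apply (sum1_series (fun t k => / od n ^ (2 * (c - t + 1) + 1) * / od k ^ (2 * t + 1))).
    intros t Ht.
    pose proof (@is_series_scal_l R_AbsRing R_NormedModule (/ od n ^ (2 * (c - t + 1) + 1)) _ _
       (lambda_series (2 * t + 1) ltac:(lia))) as H. exact H.
  - apply Phi_series.
  - apply indic_series.
Qed.

Definition Cl (c k : nat) : R :=
  - / od k ^ (2 * c + 3) * (harmonic k + 2 * ln 2) + / od k ^ (2 * c + 4).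

Lemma col_series c k : is_series (fun n => Kf c n k) (Cl c k).
Proof.
  apply is_series_ext with (fun n =>
    (- / od k ^ (2 * c + 3)) * Mk k n + 1 * (if Nat.eq_dec n k then / od k ^ (2 * c + 4) else 0)
    - (if Nat.eq_dec n k then 0 else 0)).
  { intros n. rewrite Kf_col. toR. destruct (Nat.eq_dec n k); ring. }
  unfold Cl. replace (- / od k ^ (2 * c + 3) * (harmonic k + 2 * ln 2) + / od k ^ (2 * c + 4))
    with ((- / od k ^ (2 * c + 3)) * (harmonic k + 2 * ln 2) + 1 * / od k ^ (2 * c + 4) - 0) by ring.
  apply is_series_lin3.
  - apply Phi_series.
  - apply indic_series.
  - apply indic_series.
Qed.


Lemma H_le n : harmonic n <= INR n.
Proof.
  induction n; [simpl; lra|]. rewrite H_S, S_INR. pose proof (pos_INR n).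
  assert (/ (INR n + 1) <= 1).
  { rewrite <- Rinv_1. apply Rinv_le_contravar; lra. }
  lra.
Qed.

Lemma harm_series c : ex_series (fun n => harmonic n / od n ^ (2 * c + 3)).
Proof.
  apply (@ex_series_le R_AbsRing R_CompleteNormedModule _ (fun n => / od n ^ (2 * c + 2))).
  2: { exists (dlambda (2 * c + 2)). apply lambda_series. lia. }
  intros n. change (norm (harmonic n / od n ^ (2 * c + 3))) with (Rabs (harmonic n / od n ^ (2 * c + 3))).
  pose proof (od_ge1 n). pose proof (H_nonneg n). pose proof (H_le n).
  assert (0 < od n ^ (2 * c + 2)) by (apply pow_lt; lra).
  replace (od n ^ (2 * c + 3)) with (od n ^ (2 * c + 2) * od n) by (replace (2 * c + 3)%nat with (S (2 * c + 2)) by lia; simpl; ring).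
  rewrite Rabs_pos_eq.
  2: { unfold Rdiv. apply Rmult_le_pos; [lra|]. apply Rlt_le, Rinv_0_lt_compat. nra. }
  assert (harmonic n <= od n) by (unfold od; lra).
  unfold Rdiv. rewrite Rinv_mult.
  apply Rle_trans with (od n * (/ od n ^ (2 * c + 2) * / od n)).
  - apply Rmult_le_compat_r; [|lra]. apply Rmult_le_pos; apply Rlt_le, Rinv_0_lt_compat; lra.
  - right. field. split; lra.
Qed.

Lemma general c : (1 <= c)%nat ->
  is_series (fun n => harmonic n / od n ^ (2 * c + 3))
    (- 2 * dlambda (2 * c + 3) * ln 2 + (INR c + 3 / 2) * dlambda (2 * c + 4)
     - sum_1_to (fun t => dlambda (2 * (c - t + 1) + 1) * dlambda (2 * t + 1)) c).
Proof.
  intros Hc.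
  set (P := Series (fun n => harmonic n / od n ^ (2 * c + 3))).
  assert (HP : is_series (fun n => harmonic n / od n ^ (2 * c + 3)) P) by (apply Series_correct, harm_series).
  set (Lsum := sum_1_to (fun t => dlambda (2 * (c - t + 1) + 1) * dlambda (2 * t + 1)) c).
  assert (SR : is_series (Rw c) (2 * Lsum + 1 * (1 * P + (2 * ln 2) * dlambda (2 * c + 3) - 0)
                                  - (2 * INR c + 2) * dlambda (2 * c + 4))).
  { apply is_series_ext with (fun n => 2 * sum_1_to (fun t => / od n ^ (2 * (c - t + 1) + 1) * dlambda (2 * t + 1)) c
        + 1 * (1 * (harmonic n / od n ^ (2 * c + 3)) + (2 * ln 2) * / od n ^ (2 * c + 3) - (if Nat.eq_dec n 0 then 0 else 0))
        - (2 * INR c + 2) * / od n ^ (2 * c + 4)).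
    { intros n. unfold Rw. toR. destruct (Nat.eq_dec n 0); unfold Rdiv; ring. }
    apply is_series_lin3.
    - apply (sum1_series (fun t n => / od n ^ (2 * (c - t + 1) + 1) * dlambda (2 * t + 1))).
      intros t Ht. apply is_series_scal_r. apply lambda_series. lia.
    - apply is_series_lin3; [exact HP | apply lambda_series; lia | apply indic_series].
    - pose proof (@is_series_scal_l R_AbsRing R_NormedModule (2 * INR c + 2) _ _
        (lambda_series (2 * c + 4) ltac:(lia))) as H. exact H. }
  assert (SC : is_series (Cl c) ((- 1) * (1 * P + (2 * ln 2) * dlambda (2 * c + 3) - 0) + 1 * dlambda (2 * c + 4) - 0)).
  { apply is_series_ext with (fun k => (- 1) * (1 * (harmonic k / od k ^ (2 * c + 3)) + (2 * ln 2) * / od k ^ (2 * c + 3) - (if Nat.eq_dec k 0 then 0 else 0))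
        + 1 * / od k ^ (2 * c + 4) - (if Nat.eq_dec k 0 then 0 else 0)).
    { intros k. unfold Cl. toR. destruct (Nat.eq_dec k 0); unfold Rdiv; ring. }
    apply is_series_lin3.
    - apply is_series_lin3; [exact HP | apply lambda_series; lia | apply indic_series].
    - apply lambda_series; lia.
    - apply indic_series. }
  pose proof (fubini (Kf c) (fun n => / od n ^ 2) (fun n => / od n ^ 2) (Rw c) (Cl c)
    (dlambda 2) (dlambda 2) _ _ (fun n k => Kf_bound c n k Hc)
    (fun n => Rlt_le _ _ (Rinv_0_lt_compat _ (pow_lt _ 2 (od_pos n))))
    (fun n => Rlt_le _ _ (Rinv_0_lt_compat _ (pow_lt _ 2 (od_pos n))))
    (lambda_series 2 (le_n 2)) (lambda_series 2 (le_n 2))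
    (row_series c) (col_series c) SR SC) as EQ.
  assert (EP : P = - 2 * dlambda (2 * c + 3) * ln 2 + (INR c + 3 / 2) * dlambda (2 * c + 4) - Lsum).
  { set (l2 := ln 2) in *. set (A := dlambda (2 * c + 3)) in *. set (B := dlambda (2 * c + 4)) in *. set (Ic := INR c) in *. replace (- 2 * A * l2) with (-2 * (l2 * A)) by ring. replace ((Ic + 3 / 2) * B) with (Ic * B + 3 / 2 * B) by field. set (X := l2 * A) in *. set (Y := Ic * B) in *. assert (2 * l2 * A = 2 * X) by (unfold X; ring). assert ((2 * Ic + 2) * B = 2 * Y + 2 * B) by (unfold Y; ring). lra. }
  rewrite <- EP. exact HP.
Qed.


Lemma sum1_split g m n : sum_1_to g (m + n) = sum_1_to g m + sum_1_to (fun u => g (m + u)%nat) n.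
Proof.
  induction n.
  - rewrite Nat.add_0_r. simpl. ring.
  - rewrite Nat.add_succ_r, !sum1_S, IHn, Nat.add_succ_r. ring.
Qed.

Lemma sum1_front h n : sum_1_to h (S n) = h 1%nat + sum_1_to (fun u => h (S u)) n.
Proof.
  induction n.
  - simpl. ring.
  - rewrite (sum1_S h (S n)), IHn, sum1_S. ring.
Qed.

Lemma sum1_rev h n : sum_1_to h n = sum_1_to (fun u => h (n + 1 - u)%nat) n.
Proof.
  induction n.
  - reflexivity.
  - rewrite sum1_S, IHn, sum1_front.
    replace (S n + 1 - 1)%nat with (S n) by lia.
    change (fun u => h (S n + 1 - S u)%nat) with (fun u => h (n + 1 - u)%nat). ring.
Qed.

Lemma fold_sum b : (1 <= b)%nat ->
  sum_1_to (fun t => dlambda (2 * ((2 * b - 1) - t + 1) + 1) * dlambda (2 * t + 1)) (2 * b - 1)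
  = dlambda (2 * b + 1) ^ 2
    + 2 * sum_1_to (fun q => dlambda (2 * q + 1) * dlambda (4 * b - 2 * q + 1)) (b - 1).
Proof.
  intros Hb.
  set (g := fun q => dlambda (2 * q + 1) * dlambda (4 * b - 2 * q + 1)).
  rewrite (sum1_ext_loc _ g).
  2: { intros t Ht. unfold g. rewrite Rmult_comm. f_equal. f_equal. lia. }
  destruct b as [|p]; [lia|].
  replace (S p - 1)%nat with p by lia.
  replace (2 * S p - 1)%nat with (p + S p)%nat by lia.
  rewrite sum1_split, sum1_front.
  rewrite (sum1_ext_loc (fun u => g (p + S u)%nat) (fun u => g (p + 1 - u)%nat)).
  2: { intros t Ht. unfold g. rewrite Rmult_comm. f_equal; f_equal; lia. }
  rewrite <- sum1_rev.
  replace (p + 1)%nat with (S p) by lia.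
  unfold g. replace (4 * S p - 2 * S p + 1)%nat with (2 * S p + 1)%nat by lia. ring.
Qed.

Theorem mainTheorem5 (b : nat) (hb : (1 <= b)%nat) :
  is_series (fun m : nat => harmonic (S m) / (2 * INR (S m) + 1) ^ (4 * b + 1))
    (- 2 * dlambda (4 * b + 1) * ln 2
     + (2 * INR b + / 2) * dlambda (4 * b + 2)
     - (dlambda (2 * b + 1)) ^ 2
     - 2 * sum_1_to
             (fun q => dlambda (2 * q + 1) * dlambda (4 * b - 2 * q + 1)) (b - 1)).
Proof.
  assert (Hc : (1 <= 2 * b - 1)%nat) by lia.
  pose proof (general (2 * b - 1) Hc) as G.
  rewrite fold_sum in G by exact hb.
  replace (2 * (2 * b - 1) + 3)%nat with (4 * b + 1)%nat in G by lia.
  replace (2 * (2 * b - 1) + 4)%nat with (4 * b + 2)%nat in G by lia.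
  rewrite minus_INR in G by lia. rewrite mult_INR in G. simpl INR in G.
  apply (is_series_incr_1 (fun n => harmonic n / od n ^ (4 * b + 1))).
  match goal with |- is_series _ ?x => replace x with
    (- 2 * dlambda (4 * b + 1) * ln 2 + ((1 + 1) * INR b - 1 + 3 / 2) * dlambda (4 * b + 2)
     - (dlambda (2 * b + 1) ^ 2 + 2 * sum_1_to (fun q => dlambda (2 * q + 1) * dlambda (4 * b - 2 * q + 1)) (b - 1)))
  end.
  - exact G.
  - simpl harmonic. unfold plus. simpl. unfold Rdiv. field. apply pow_nonzero. pose proof (od_pos 0). lra.
Qed.
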